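(* Let $X=\prod_{i\in I}X_i$ be a topological product and suppose that a subspace $Y$ of $X$ fills all finite subproducts of $X$ and is $C^\ast$-embedded in $X$. If $Y$ is a $T_{3.5}$-space, then each factor $X_i$ is also a $T_{3.5}$-space.
   Context: For nonempty $J\subseteq I$, $\pi_J\colon X\to X_J=\prod_{i\in J}X_i$ is the projection. A set $Y\subseteq X$ fills finite subproducts of $X$ if $\pi_J(Y)=X_J$ for every finite nonempty $J\subseteq I$. $Y$ is $C^\ast$-embedded in $X$ if every bounded continuous real-valued function on $Y$ extends to a continuous real-valued function on $X$. A space is $T_{3.5}$ if for every closed set $F$ and point $x\notin F$ there is a continuous $f\colon X\to\mathbb{R}$ with $f(x)=1$ and $f(F)\subseteq\{0\}$ (no $T_1$ assumed). *)

(* Defs.v *)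
From HB Require Import structures.
From mathcomp Require Import all_boot all_order all_algebra.
From mathcomp Require Import all_classical all_reals all_analysis.
From mathcomp Require Import Rstruct Rstruct_topology.
From Stdlib Require Import Rdefinitions.
Set Implicit Arguments. Unset Strict Implicit. Unset Printing Implicit Defensive.
Import Order.TTheory GRing.Theory Num.Theory.
Local Open Scope classical_set_scope.
Local Open Scope ring_scope.

(** T_{3.5} (completely regular, no T_1 assumed): points and closed sets are
    separated by continuous real-valued functions. *)
Definition T35 (T : topologicalType) : Prop :=
  forall (F : set T) (x : T), closed F -> ~ F x ->
    exists f : T -> Rdefinitions.R,
      continuous f /\ f x = 1 /\ (forall y, F y -> f y = 0).

Definition C_star_embedded (X : topologicalType) (Y : set X) : Prop :=
  forall f : set_type Y -> Rdefinitions.R, continuous f ->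
    (exists M : Rdefinitions.R, forall y, `|f y| <= M) ->
    exists g : X -> Rdefinitions.R,
      continuous g /\ forall y : set_type Y, g (set_val y) = f y.

(** Y fills finite subproducts: for every finite nonempty J ⊆ I, the
    projection pi_J maps Y onto X_J = prod_{i in J} X_i (elements of X_J
    are dependent functions on J). *)
Definition fills_finite_subproducts (I : Type) (X : I -> Type)
    (Y : set (forall i, X i)) : Prop :=
  forall J : set I, finite_set J -> J !=set0 ->
    forall z : (forall i, J i -> X i),
      exists y, Y y /\ forall i (hi : J i), y i = z i hi.

(* Main.v *)
Require Import Defs.
From HB Require Import structures.
From mathcomp Require Import all_boot all_order all_algebra.
From mathcomp Require Import all_classical all_reals all_analysis.
From mathcomp Require Import Rstruct Rstruct_topology.
Local Open Scope classical_set_scope.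
Import Order.TTheory GRing.Theory Num.Theory.
Local Open Scope ring_scope.

Lemma key (I : Type) (X : I -> topologicalType) (Y : set (prod_topology X))
  (i : I) (F : set (X i)) (z : prod_topology X) :
  fills_finite_subproducts Y -> F (z i) -> forall N, nbhs z N ->
  exists w, Y w /\ F (w i) /\ N w.
Proof.
move=> fill Fz N Nz.
pose D := [set J : set I | finite_set J /\ J i].
pose B := fun J : set I => [set w : prod_topology X | Y w /\ forall j, J j -> w j = z j].
have FF : Filter (filter_from D B).
  apply: filter_from_filter; first by exists [set i]; split => //; exact: finite_set1.
  move=> J1 J2 [fJ1 iJ1] [fJ2 iJ2]; exists (J1 `|` J2).
    by split; [rewrite finite_setU | left].
  by move=> w [Yw Hw]; split; split => // j Jj; apply: Hw; [left|right].
have cv : filter_from D B --> z.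
  apply/cvg_sup => j.
  move=> A /= [_ [[V Vop <-] Vz sVA]].
  rewrite nbhs_filterE; exists ([set i] `|` [set j]).
    by split; [rewrite finite_setU; split; exact: finite_set1 | left].
  by move=> w [Yw Hw]; apply: sVA => /=; rewrite Hw //; right.
have := cv N Nz; rewrite nbhs_filterE => -[J [fJ Ji] BJN].
have [w [Yw Hw]] := fill J fJ (ex_intro _ i Ji) (fun j _ => z j).
exists w; split => //; split; first by rewrite Hw.
by apply: BJN; split.
Qed.

Theorem proposition3p3 (I : Type) (X : I -> topologicalType)
  (Y : set (prod_topology X)) :
  fills_finite_subproducts Y ->
  C_star_embedded Y ->
  T35 (set_type Y) ->
  forall i : I, T35 (X i).
Proof.
move=> fill Cst T35Y i F x clF nFx.
have [y0 [Yy0 y0i]] : exists y0, Y y0 /\ y0 i = x.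
  have [y [Yy Hy]] := fill [set i] (finite_set1 i) (ex_intro _ i erefl)
    (fun j (hj : [set i] j) =>
       match esym hj in _ = k return X k with erefl => x end).
  by exists y; split => //; rewrite (Hy i erefl).
pose y0' : set_type Y := exist _ y0 (mem_set Yy0).
pose F' := [set y : set_type Y | F (set_val y i)].
have clF' : closed F'.
  have cp : continuous (fun y : set_type Y => set_val y i).
    move=> y.
    have c1 : {for y, continuous (set_val : set_type Y -> prod_topology X)}.
      exact: initial_continuous.
    have c2 : {for (set_val y : prod_topology X), continuous (fun w : prod_topology X => w i)}.
      exact: (@proj_continuous {classic I} X i).
    exact: (continuous_comp c1 c2).
  exact: ((continuous_closedP _).1 cp F clF).
have nF' : ~ F' y0'.
  by rewrite /F' /= /y0' set_valE /= y0i.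
have [h [ch [h1 h0]]] := T35Y F' y0' clF' nF'.
pose h' := fun y => Num.max (Num.min (h y) 1%R) 0%R.
have ch' : continuous h'.
  move=> y.
  have := @continuous_max Rdefinitions.R _ (fun y => Num.min (h y) 1%R) (fun=> 0%R) y.
  apply; last exact: cst_continuous.
  have := @continuous_min Rdefinitions.R _ h (fun=> 1%R) y.
  by apply; [exact: ch | exact: cst_continuous].
have bh' : exists M : Rdefinitions.R, forall y, `|h' y| <= M.
  exists 1%R => y; rewrite /h' ger0_norm ?le_max ?lexx ?orbT //.
  by rewrite ge_max ler01 ge_min lexx orbT.
have [g [cg gh]] := Cst h' ch' bh'.
pose f := fun t : X i => g (@dfwith {classic I} X y0 i t).
exists f; split.
  move=> t.
  have dc : {for t, continuous (fun s : X i => (@dfwith {classic I} X y0 i s : prod_topology X))}.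
    exact: (@dfwith_continuous {classic I} X y0 i t).
  exact: (continuous_comp dc (cg _)).
split.
  rewrite /f; have -> : @dfwith {classic I} X y0 i x = y0.
    by apply: functional_extensionality_dep => j; case: dfwithP => //; rewrite y0i.
  have -> : y0 = set_val y0' by rewrite set_valE.
  by rewrite gh /h' h1 (@min_l _ _ 1%R) ?lexx // max_l ?ler01.
move=> t Ft; apply/eqP/negPn/negP => gz.
have Fz : F ((@dfwith {classic I} X y0 i t : prod_topology X) i) by rewrite dfwithin.
have Nz : nbhs (@dfwith {classic I} X y0 i t : prod_topology X) (g @^-1` [set r | r != 0%R]).
  apply: cg; apply: open_nbhs_nbhs; split; [exact: open_neq | exact: gz].
have [w [Yw [Fw gw]]] := @key _ _ Y _ _ _ fill Fz _ Nz.
move: gw; rewrite /= => /eqP; apply.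
have -> : w = set_val (exist (fun x => x \in Y) w (mem_set Yw)) by rewrite set_valE.
rewrite gh /h' h0; last by rewrite /F' /= set_valE.
by rewrite (@min_l _ _ 0%R) ?ler01 // maxxx.
Qed.
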